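(* Let $G_0,G_1\in\mathbb{Z}$, let $(G_n)_{n\ge0}$ satisfy $G_n=G_{n-1}+G_{n-2}$ for $n\ge2$, and let $\mu = G_1^2 - G_0 G_1 - G_0^2$. For all $k\ge 1$, $$\mathcal{G}^2_{G_0,G_1}(k) = \begin{cases} \gcd\left(G_{k+1}^2 - G_1^2,\; G_{k+2}^2 - G_2^2\right), & \text{if $k$ is even},\\ \gcd\left(2 \mu,\; G_{k+1}^2 - G_1^2,\; G_{k+2}^2 - G_2^2\right), & \text{if $k$ is odd}.\end{cases}$$
   Context: $\mathcal{G}^2_{G_0,G_1}(k)=\gcd\{\sum_{i=1}^k G_{n+i}^2 : n\ge 0\}$ (nonnegative gcd of this infinite set of integers). *)

(* Defs.v *)
From mathcomp Require Import all_boot all_order all_algebra.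
Set Implicit Arguments. Unset Strict Implicit. Unset Printing Implicit Defensive.
Import Order.TTheory GRing.Theory Num.Theory.
Local Open Scope ring_scope.

Definition is_gcd_of_set (S : nat -> int) (d : int) : Prop :=
  0 <= d /\ (forall n, (d %| S n)%Z) /\
  (forall e : int, (forall n, (e %| S n)%Z) -> (e %| d)%Z).

Definition sq_window_sum (G : nat -> int) (k n : nat) : int :=
  \sum_(1 <= i < k.+1) G (n + i)%N ^+ 2.

(* Main.v *)
Require Import Defs.
From mathcomp Require Import all_boot all_order all_algebra.
From mathcomp Require Import ring.
Import Order.TTheory GRing.Theory Num.Theory.
Local Open Scope ring_scope.

Lemma dvd_lin2 (d a b x u v : int) : (d %| a)%Z -> (d %| b)%Z ->
  x = u * a + v * b -> (d %| x)%Z.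
Proof. by move=> ha hb ->; apply: rpredD; apply: dvdz_mull. Qed.

Lemma dvd_lin3 (d a b c x u v w : int) : (d %| a)%Z -> (d %| b)%Z -> (d %| c)%Z ->
  x = u * a + v * b + w * c -> (d %| x)%Z.
Proof. by move=> ha hb hc ->; apply: rpredD; [apply: rpredD|]; apply: dvdz_mull. Qed.

Section S.
Variable G : nat -> int.
Hypothesis hG : forall n : nat, G n.+2 = G n.+1 + G n.

Definition P m := G m * G m.+1.
Definition C m := G m.+1 ^+ 2 - G m * G m.+2.

Lemma Pstep m : P m.+1 - P m = G m.+1 ^+ 2.
Proof. rewrite /P hG; ring. Qed.

Lemma Cstep m : C m.+1 = - C m.
Proof. rewrite /C (hG m.+1) (hG m); ring. Qed.

Lemma Cpar m : C m = (-1) ^+ m * C 0.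
Proof. elim: m => [|m IH]; first by rewrite expr0 mul1r.
by rewrite Cstep IH exprS; ring. Qed.

Lemma Sform k n : sq_window_sum G k n = P (n + k)%N - P n.
Proof.
rewrite /sq_window_sum; elim: k => [|k IH].
  by rewrite big_geq // addn0 subrr.
rewrite big_nat_recr //= IH !addnS -(Pstep (n + k)); ring.
Qed.

Lemma xrec m : G m.+2 ^+ 2 - 3 * G m.+1 ^+ 2 + G m ^+ 2 = - 2 * C m.
Proof. rewrite /C (hG m); ring. Qed.
End S.

Theorem theorem3p11 (G : nat -> int)
  (hG : forall n : nat, G n.+2 = G n.+1 + G n)
  (k : nat) (hk : (1 <= k)%N) :
  let mu := G 1%N ^+ 2 - G 0%N * G 1%N - G 0%N ^+ 2 in
  is_gcd_of_set (sq_window_sum G k)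
    (if ~~ odd k then
       gcdz (G k.+1 ^+ 2 - G 1%N ^+ 2) (G k.+2 ^+ 2 - G 2%N ^+ 2)
     else
       gcdz (gcdz (2 * mu) (G k.+1 ^+ 2 - G 1%N ^+ 2)) (G k.+2 ^+ 2 - G 2%N ^+ 2)).
Proof.
move=> mu.
have C0 : C G 0 = mu by rewrite /C /mu (hG 0); ring.
pose T n := G (n + k).+1 ^+ 2 - G n.+1 ^+ 2.
have ST n : sq_window_sum G k n.+1 = sq_window_sum G k n + T n.
  rewrite !Sform // /T -(Pstep G hG (n + k)) -(Pstep G hG n) addSn; ring.
have T0 : T 0%N = G k.+1 ^+ 2 - G 1%N ^+ 2 by rewrite /T add0n.
have T1 : T 1%N = G k.+2 ^+ 2 - G 2%N ^+ 2 by rewrite /T add1n.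
have S0 : sq_window_sum G k 0 = T 1%N - 2 * T 0%N - (1 - (-1) ^+ k) * mu.
  have hc := Cpar G hG k; rewrite C0 in hc.
  rewrite Sform // add0n /P T0 T1 mulrBl mul1r -hc /C (hG k) /mu (hG 0); ring.
have Trec n : T n.+2 = 3 * T n.+1 - T n
     - 2 * (1 - (-1) ^+ k) * ((-1) ^+ n.+1 * (- mu)).
  have h1 := xrec G hG (n + k).+1; have h2 := xrec G hG n.+1.
  rewrite /T !addSn; apply/eqP; rewrite -subr_eq0; apply/eqP.
  have -> : G (n + k).+3 ^+ 2 = 3 * G (n + k).+2 ^+ 2 - G (n + k).+1 ^+ 2
     - 2 * C G (n + k).+1 by rewrite -[LHS]subr0 -(subrr (- 2 * C G (n+k).+1)) -{1}h1; ring.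
  have -> : G n.+3 ^+ 2 = 3 * G n.+2 ^+ 2 - G n.+1 ^+ 2
     - 2 * C G n.+1 by rewrite -[LHS]subr0 -(subrr (- 2 * C G n.+1)) -{1}h2; ring.
  rewrite (Cpar G hG (n + k).+1) (Cpar G hG n.+1) C0 -addSn exprD; ring.
have main : forall d : int, (d %| T 0%N)%Z -> (d %| T 1%N)%Z ->
    (d %| (1 - (-1) ^+ k) * mu)%Z -> forall n, (d %| sq_window_sum G k n)%Z.
  move=> d h0 h1 hm.
  have hT : forall n, (d %| T n)%Z /\ (d %| T n.+1)%Z.
    elim=> [|n [IH1 IH2]]; first by split.
    split=> //; rewrite Trec.
    apply: (@dvd_lin3 _ _ _ _ _ 3 (-1) (- 2 * (-1) ^+ n.+1 * (- 1)) IH2 IH1 hm).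
    ring.
  elim=> [|n IH]; first by rewrite S0; apply: (@dvd_lin3 _ _ _ _ _ 1 (-2) (-1) h1 h0 hm); ring.
  by rewrite ST; apply: rpredD => //; case: (hT n).
have eT0 : forall e : int, (forall n, (e %| sq_window_sum G k n)%Z) -> (e %| T 0%N)%Z.
  move=> e he; have := ST 0%N; move=> h.
  by apply: (@dvd_lin2 _ _ _ _ 1 (-1) (he 1%N) (he 0%N)); rewrite h; ring.
have eT1 : forall e : int, (forall n, (e %| sq_window_sum G k n)%Z) -> (e %| T 1%N)%Z.
  move=> e he; have := ST 1%N; move=> h.
  by apply: (@dvd_lin2 _ _ _ _ 1 (-1) (he 2%N) (he 1%N)); rewrite h; ring.
case hodd: (odd k) => /=.
- have hs : (-1) ^+ k = -1 :> int by rewrite -signr_odd hodd.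
  split; first by [].
  split.
    apply: main.
    + by rewrite T0; apply: dvdz_trans (dvdz_gcdl _ _) _; exact: dvdz_gcdr.
    + by rewrite T1; exact: dvdz_gcdr.
    + rewrite hs; have -> : (1 - -1) * mu = 2 * mu by ring.
      by apply: dvdz_trans (dvdz_gcdl _ _) _; exact: dvdz_gcdl.
  move=> e he; rewrite !dvdz_gcd -T0 -T1 eT0 // eT1 // !andbT.
  have h := S0; rewrite hs in h.
  apply: (@dvd_lin3 _ _ _ _ _ 1 (-2) (-1) (eT1 e he) (eT0 e he) (he 0%N)).
  rewrite h; ring.
- have hs : (-1) ^+ k = 1 :> int by rewrite -signr_odd hodd.
  split; first by [].
  split.
    apply: main.
    + by rewrite T0; exact: dvdz_gcdl.
    + by rewrite T1; exact: dvdz_gcdr.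
    + by rewrite hs subrr mul0r dvdz0.
  by move=> e he; rewrite !dvdz_gcd -T0 -T1 eT0 // eT1.
Qed.
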